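(* Let $M\ge 1$ be an integer and consider a memoryless channel with binary input alphabet $\{0,1\}$, output alphabet $\mathcal{Y}=\{-M,\dots,0,\dots,M\}$ and transition probabilities $\varepsilon_{y|x}=P_{Y|X}(y|x)$, which is symmetric in the sense that $\varepsilon_{y|1}=\varepsilon_{-y|0}$ for all $y\in\mathcal{Y}$. Let $\mathcal{C}\subseteq\{0,1\}^n$ be a binary linear code of length $n$ with minimum Hamming distance $d_{\min}$ and weight distribution $S_w$ ($S_w$ = number of codewords of Hamming weight $w$), used over this channel with maximum-likelihood decoding. Then the decoding error probability $P_e$ satisfies $$P_e\le \sum_{\substack{\boldsymbol{\ell}=(\ell_{-M},\dots,\ell_M)\in\mathbb{Z}_+^{2M+1}\\ \sum_j\ell_j=n}}\Big(\prod_{j=-M}^M \varepsilon_{j|0}^{\ell_j}\Big)\min\Bigg\{\sum_{w=d_{\min}}^n S_w\sum_{\substack{\boldsymbol{\mu}\in\mathcal{U}_w(\boldsymbol{\ell})\\ \sum_j\mu_j\mathrm{LLR}_j\le 0}}\binom{w}{\mu_{-M},\dots,\mu_M}\binom{n-w}{\ell_{-M}-\mu_{-M},\dots,\ell_M-\mu_M},\ \binom{n}{\ell_{-M},\dots,\ell_M}\Bigg\}.$$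
   Context: $\mathbb{Z}_+$ denotes the nonnegative integers, and $\binom{m}{a_1,\dots,a_k}=\frac{m!}{a_1!\cdots a_k!}$ is the multinomial coefficient (for $a_i\in\mathbb{Z}_+$ with $\sum a_i=m$). For $\boldsymbol{\ell}\in\mathbb{Z}_+^{2M+1}$ with $\sum_j\ell_j=n$ and $0\le w\le n$, $\mathcal{U}_w(\boldsymbol{\ell})=\{\boldsymbol{\mu}=(\mu_{-M},\dots,\mu_M)\in\mathbb{Z}_+^{2M+1}:\ \sum_j\mu_j=w,\ 0\le\mu_j\le\ell_j \text{ for all } j\}$. $\mathrm{LLR}_j=\log(\varepsilon_{j|0}/\varepsilon_{j|1})$; the condition $\sum_j\mu_j\mathrm{LLR}_j\le 0$ means $\prod_j(\varepsilon_{j|0}/\varepsilon_{j|1})^{\mu_j}\le 1$, i.e. a length-$w$ output vector with $\mu_j$ occurrences of symbol $j$ is at least as likely under the all-ones input as under the all-zeros input. By linearity and symmetry the error probability does not depend on the transmitted codeword, and the bound is on the probability that the decoder does not output the transmitted codeword (ties in the likelihood are counted as errors). *)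

(* Defs.v *)
From HB Require Import structures.
From mathcomp Require Import all_boot all_order all_algebra.
Set Implicit Arguments. Unset Strict Implicit. Unset Printing Implicit Defensive.
Import Order.TTheory GRing.Theory Num.Theory.
Local Open Scope ring_scope.

(* Output alphabet {-M,...,M} is represented by 'I_(2M+1): the ordinal j
   stands for the symbol j - M, so that the negation y |-> -y is rev_ord. *)
Notation Yout M := ('I_(2 * M + 1)).

Definition multinom (R : fieldType) (K : finType) (m : nat) (a : K -> nat) : R :=
  (m`!)%:R / (\prod_(k : K) ((a k)`!)%:R).

Definition hwt n (c : 'rV['F_2]_n) : nat := #|[set i : 'I_n | c 0 i != 0]|.
Definition hdist n (c c' : 'rV['F_2]_n) : nat := #|[set i : 'I_n | c 0 i != c' 0 i]|.

Definition wdist n (C : {vspace 'rV['F_2]_n}) (w : nat) : nat :=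
  #|[set c : 'rV['F_2]_n | (c \in C) && (hwt c == w)]|.

Definition is_dmin n (C : {vspace 'rV['F_2]_n}) (d : nat) : Prop :=
  (exists c1, exists c2, [/\ c1 \in C, c2 \in C, c1 != c2 & hdist c1 c2 = d]) /\
  (forall c1 c2, c1 \in C -> c2 \in C -> c1 != c2 -> (d <= hdist c1 c2)%N).

Definition lik (R : realFieldType) M n (eps : 'F_2 -> Yout M -> R)
    (c : 'rV['F_2]_n) (y : {ffun 'I_n -> Yout M}) : R :=
  \prod_(i < n) eps (c 0 i) (y i).

(* ML decoding error probability when c is transmitted: the decoder fails
   iff some other codeword is at least as likely (ties count as errors). *)
Definition Perr (R : realFieldType) M n (eps : 'F_2 -> Yout M -> R)
    (C : {vspace 'rV['F_2]_n}) (c : 'rV['F_2]_n) : R :=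
  \sum_(y : {ffun 'I_n -> Yout M})
     lik eps c y *
     (if [exists c' : 'rV['F_2]_n, [&& c' \in C, c' != c & lik eps c y <= lik eps c' y]]
      then 1 else 0).

(* Vectors l, mu in Z_+^(2M+1) with entries
   bounded by n are represented as finite functions into 'I_n.+1 (no loss,
   since their entries sum to n resp. w <= n).
   The LLR condition sum_j mu_j LLR_j <= 0 is written in its product form
   prod_j eps_{j|0}^mu_j <= prod_j eps_{j|1}^mu_j. *)
Definition bound (R : realFieldType) M n (eps : 'F_2 -> Yout M -> R)
    (C : {vspace 'rV['F_2]_n}) (dmin : nat) : R :=
  \sum_(l : {ffun Yout M -> 'I_n.+1} | (\sum_j (l j : nat) == n)%N)
    (\prod_j eps 0 j ^+ l j) *
    Num.min
      (\sum_(dmin <= w < n.+1)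
         (wdist C w)%:R *
         \sum_(mu : {ffun Yout M -> 'I_n.+1} |
                 [&& (\sum_j (mu j : nat) == w)%N,
                     [forall j, (mu j <= l j)%N] &
                     \prod_j eps 0 j ^+ mu j <= \prod_j eps 1 j ^+ mu j])
           multinom R w (fun j => mu j : nat) *
           multinom R (n - w) (fun j => (l j - mu j)%N))
      (multinom R n (fun j => l j : nat)).

(* Main.v *)
Require Import Defs.
From HB Require Import structures.
From mathcomp Require Import all_boot all_order all_algebra.
From mathcomp Require Import ring lra zify.
Set Implicit Arguments. Unset Strict Implicit. Unset Printing Implicit Defensive.
Import Order.TTheory GRing.Theory Num.Theory.
Local Open Scope ring_scope.

Definition cnt n (P : 'I_n -> bool) : nat := (\sum_(i < n) (P i : nat))%N.

Lemma cnt_card n (P : 'I_n -> bool) : cnt P = #|[set i | P i]|.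
Proof.
rewrite -sum1dep_card /cnt [RHS]big_mkcond /=; apply: eq_bigr => i _.
by case: (P i).
Qed.

Lemma cnt_le n (P : 'I_n -> bool) : (cnt P <= n)%N.
Proof.
rewrite /cnt -[X in (_ <= X)%N]card_ord -sum1_card.
by apply: leq_sum => i _; case: (P i).
Qed.

Lemma cntS n (P : 'I_n.+1 -> bool) : cnt P = (P ord0 + cnt (fun i => P (lift ord0 i)))%N.
Proof. by rewrite /cnt big_ord_recl. Qed.

Lemma cnt_split n (m P : 'I_n -> bool) :
  cnt P = (cnt (fun i => m i && P i) + cnt (fun i => ~~ m i && P i))%N.
Proof.
rewrite /cnt -big_split /=; apply: eq_bigr => i _.
by case: (m i); case: (P i).
Qed.

Lemma cnt_sum n (K : finType) (y : 'I_n -> K) (m : 'I_n -> bool) :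
  (\sum_(j : K) cnt (fun i => m i && (y i == j)) = cnt m)%N.
Proof.
rewrite /cnt exchange_big /=; apply: eq_bigr => i _.
rewrite (bigD1 (y i)) //= eqxx andbT big1 ?addn0 //.
by move=> j /negbTE; rewrite eq_sym => ->; rewrite andbF.
Qed.

Lemma F2_cases (x : 'F_2) : x = 0 \/ x = 1.
Proof.
case: x => [[|[|//]]] Hx; [left|right]; exact: val_inj.
Qed.

Lemma prod_type (R : comRingType) n (K : finType) (y : 'I_n -> K) (P : 'I_n -> bool) (f : K -> R) :
  \prod_(i | P i) f (y i) = \prod_(j : K) f j ^+ cnt (fun i => P i && (y i == j)).
Proof.
rewrite (partition_big y predT) //=; apply: eq_bigr => j _.
rewrite (eq_bigr (fun=> f j)); last by move=> i /andP[_ /eqP ->].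
by rewrite prodr_const cnt_card cardsE.
Qed.
Lemma fact_neq0 (R : numFieldType) k : (k`!)%:R != 0 :> R.
Proof. by rewrite pnatr_eq0 -lt0n fact_gt0. Qed.

Lemma prod_fact_neq0 (R : numFieldType) (K : finType) (a : K -> nat) :
  \prod_k ((a k)`!)%:R != 0 :> R.
Proof. by apply/prodf_neq0 => k _; exact: fact_neq0. Qed.

Lemma multinom0 (R : numFieldType) (K : finType) (a : K -> nat) :
  (forall k, a k = 0%N) -> multinom R 0 a = 1.
Proof.
move=> a0; rewrite /multinom big1 ?divr1 // => k _; by rewrite a0.
Qed.

Lemma multinom_term (R : numFieldType) (K : finType) (m : nat) (a : K -> nat) k :
  (0 < a k)%N%:R * multinom R m (fun j => a j - (j == k))%N
  = (m`!)%:R * (a k)%:R / \prod_j ((a j)`!)%:R.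
Proof.
case Ek: (a k) => [|t] /=; first by rewrite mul0r mulr0 mul0r.
rewrite mul1r /multinom (bigD1 k) //= [in RHS](bigD1 k) //= eqxx Ek subn1 /=.
have -> : \prod_(j | j != k) ((a j - (j == k))`!)%:R = \prod_(j | j != k) ((a j)`!)%:R :> R.
  by apply: eq_bigr => j /negbTE ->; rewrite subn0.
have hQ' : \prod_(j | j != k) ((a j)`!)%:R != 0 :> R.
  by apply/prodf_neq0 => j _; exact: fact_neq0.
rewrite factS natrM.
have ht := fact_neq0 R t.
have ht1 : 1 + t%:R != 0 :> R by rewrite addrC natr1 pnatr_eq0.
by field; rewrite hQ' ht ht1.
Qed.

Lemma multinomS (R : numFieldType) (K : finType) (m : nat) (a : K -> nat) :
  (\sum_j a j)%N = m.+1 ->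
  multinom R m.+1 a = \sum_k (0 < a k)%N%:R * multinom R m (fun j => a j - (j == k))%N.
Proof.
move=> hs; rewrite (eq_bigr _ (fun k _ => multinom_term R m a k)).
rewrite -big_distrl -big_distrr /= -natr_sum hs /multinom factS natrM.
by rewrite [_ * m`!%:R]mulrC.
Qed.

Definition fcons n (K : finType) (k : K) (z : {ffun 'I_n -> K}) : {ffun 'I_n.+1 -> K} :=
  [ffun i => if unlift ord0 i is Some i' then z i' else k].

Lemma fcons0 n (K : finType) (k : K) (z : {ffun 'I_n -> K}) : fcons k z ord0 = k.
Proof. by rewrite ffunE unlift_none. Qed.

Lemma fconsS n (K : finType) (k : K) (z : {ffun 'I_n -> K}) i : fcons k z (lift ord0 i) = z i.
Proof. by rewrite ffunE liftK. Qed.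

Lemma sum_ffunS (R : numFieldType) n (K : finType) (F : {ffun 'I_n.+1 -> K} -> R) :
  \sum_y F y = \sum_(k : K) \sum_(z : {ffun 'I_n -> K}) F (fcons k z).
Proof.
rewrite pair_big /= (reindex (fun p : K * {ffun 'I_n -> K} => fcons p.1 p.2)) //=.
apply: onW_bij.
exists (fun y : {ffun 'I_n.+1 -> K} => (y ord0, [ffun i => y (lift ord0 i)])).
  move=> [k z] /=; rewrite fcons0; congr pair; apply/ffunP => i.
  by rewrite ffunE fconsS.
move=> y; apply/ffunP => i; rewrite ffunE /=.
by case: unliftP => [j ->|->]; rewrite ?ffunE.
Qed.

Lemma cnt_fcons n (K : finType) (m : 'I_n.+1 -> bool) (k j : K) (z : {ffun 'I_n -> K}) :
  cnt (fun i => m i && (fcons k z i == j)) =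
  ((m ord0 && (k == j)) + cnt (fun i => m (lift ord0 i) && (z i == j)))%N.
Proof. by rewrite cntS fcons0; congr addn; apply: eq_bigr => i _; rewrite fconsS. Qed.

Lemma cond_step1 (K : finType) (k : K) (c1 c2 a b : K -> nat) :
  [forall j, ((k == j) + c1 j == a j)%N && (c2 j == b j)] =
  (0 < a k)%N && [forall j, (c1 j == a j - (j == k))%N && (c2 j == b j)].
Proof.
apply/forallP/andP.
  move=> H; split.
    by move: (H k); rewrite eqxx => /andP[/eqP <-].
  apply/forallP => j; move: (H j) => /andP[/eqP <- ->]; rewrite andbT [j == k]eq_sym.
  by rewrite addKn.
move=> [ak /forallP H] j; move: (H j) => /andP[/eqP -> ->]; rewrite andbT [j == k]eq_sym.
case: (k =P j) => [<-|_]; last by rewrite subn0.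
by rewrite add1n subn1 prednK.
Qed.

Lemma cond_step2 (K : finType) (k : K) (c1 c2 a b : K -> nat) :
  [forall j, (c1 j == a j)%N && ((k == j) + c2 j == b j)%N] =
  (0 < b k)%N && [forall j, (c1 j == a j)%N && (c2 j == b j - (j == k))%N].
Proof.
have E1 : [forall j, (c1 j == a j)%N && ((k == j) + c2 j == b j)%N] =
          [forall j, ((k == j) + c2 j == b j)%N && (c1 j == a j)%N].
  by apply: eq_forallb => j; rewrite andbC.
have E2 : [forall j, (c1 j == a j)%N && (c2 j == b j - (j == k))%N] =
          [forall j, (c2 j == b j - (j == k))%N && (c1 j == a j)%N].
  by apply: eq_forallb => j; rewrite andbC.
by rewrite E1 E2 cond_step1.
Qed.

Definition tcond n (K : finType) (m : 'I_n -> bool) (a b : K -> nat) (y : 'I_n -> K) : bool :=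
  [forall j, (cnt (fun i => m i && (y i == j)) == a j) && (cnt (fun i => ~~ m i && (y i == j)) == b j)].

Lemma count_types (R : numFieldType) n (K : finType) (m : 'I_n -> bool) (a b : K -> nat) :
  (\sum_j a j)%N = cnt m -> (\sum_j b j)%N = cnt (fun i => ~~ m i) ->
  \sum_(y : {ffun 'I_n -> K} | tcond m a b y) 1 =
    multinom R (cnt m) a * multinom R (cnt (fun i => ~~ m i)) b :> R.
Proof.
elim: n m a b => [|n IH] m a b.
  rewrite /cnt !big_ord0 => /eqP ha /eqP hb.
  move: ha hb; rewrite !sum_nat_eq0 => /forallP ha /forallP hb.
  rewrite !multinom0 ?mulr1; last 2 first.
  - by move=> k; apply/eqP; exact: hb.
  - by move=> k; apply/eqP; exact: ha.
  rewrite (eq_bigl predT); last first.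
    move=> y; apply/forallP => j; rewrite /cnt !big_ord0.
    by rewrite (eqP (ha j)) (eqP (hb j)).
  by rewrite sumr_const card_ffun card_ord expn0.
move=> ha hb.
rewrite big_mkcond sum_ffunS.
set m' := fun i : 'I_n => m (lift ord0 i).
have Ec : cnt m = (m ord0 + cnt m')%N by rewrite cntS.
have Ec' : cnt (fun i => ~~ m i) = (~~ m ord0 + cnt (fun i => ~~ m' i))%N by rewrite cntS.
case hm: (m ord0); rewrite hm /= in Ec Ec'.
- rewrite Ec add1n Ec' add0n (multinomS R (m := cnt m')); last by rewrite ha Ec.
  rewrite big_distrl /=; apply: eq_bigr => k _.
  rewrite -big_mkcond /=.
  rewrite (eq_bigl (fun z : {ffun 'I_n -> K} => (0 < a k)%N && tcond m' (fun j => a j - (j == k))%N b z)); last first.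
    move=> z; rewrite /tcond -cond_step1; apply: eq_forallb => j.
    by rewrite !cnt_fcons hm /=.
  case: (posnP (a k)) => ak.
    by rewrite big_pred0 ?mul0r // => z.
  rewrite (_ : true%:R = 1) // mul1r -(IH m' (fun j => a j - (j == k))%N b) //.
    rewrite sumnB; last by move=> j _; case: (j =P k) => [->|_]; rewrite ?eqxx.
    rewrite ha Ec (bigD1 k) //= big1 ?addn0 ?eqxx //; last first.
      by move=> j /negbTE ->.
    by rewrite add1n subn1.
  by rewrite hb Ec'.
- rewrite Ec add0n Ec' add1n (multinomS R (m := cnt (fun i => ~~ m' i))); last by rewrite hb Ec'.
  rewrite big_distrr /=; apply: eq_bigr => k _.
  rewrite -big_mkcond /=.
  rewrite (eq_bigl (fun z : {ffun 'I_n -> K} => (0 < b k)%N && tcond m' a (fun j => b j - (j == k))%N z)); last first.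
    move=> z; rewrite /tcond -cond_step2; apply: eq_forallb => j.
    by rewrite !cnt_fcons hm /=.
  case: (posnP (b k)) => bk.
    by rewrite big_pred0 ?mul0r ?mulr0 // => z.
  rewrite (_ : true%:R = 1) // mul1r -(IH m' a (fun j => b j - (j == k))%N) //.
    by rewrite ha Ec.
    rewrite sumnB; last by move=> j _; case: (j =P k) => [->|_]; rewrite ?eqxx.
    rewrite hb Ec' (bigD1 k) //= big1 ?addn0 ?eqxx //; last first.
      by move=> j /negbTE ->.
    by rewrite add1n subn1.
Qed.

Lemma eps_flip (R : realFieldType) M (eps : 'F_2 -> Yout M -> R) :
  (forall y, eps 1 y = eps 0 (rev_ord y)) ->
  forall (x c : 'F_2) y, eps x (if c == 1 then rev_ord y else y) = eps (x - c) y.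
Proof.
move=> hs x c y.
case: (F2_cases c) => ->; first by rewrite subr0.
rewrite eqxx.
case: (F2_cases x) => ->.
  have -> : (0 - 1 : 'F_2) = 1 by apply: val_inj.
  by rewrite hs.
by rewrite subrr hs rev_ordK.
Qed.

Definition phi n M (c : 'rV['F_2]_n) (y : {ffun 'I_n -> Yout M}) : {ffun 'I_n -> Yout M} :=
  [ffun i => if c 0 i == 1 then rev_ord (y i) else y i].

Lemma phiK n M (c : 'rV['F_2]_n) : involutive (@phi n M c).
Proof.
move=> y; apply/ffunP => i; rewrite !ffunE.
by case: (c 0 i == 1); rewrite ?rev_ordK.
Qed.

Lemma lik_phi (R : realFieldType) M n (eps : 'F_2 -> Yout M -> R) :
  (forall y, eps 1 y = eps 0 (rev_ord y)) ->
  forall (c d : 'rV['F_2]_n) y, lik eps d (phi c y) = lik eps (d - c) y.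
Proof.
move=> hs c d y; rewrite /lik; apply: eq_bigr => i _.
by rewrite ffunE eps_flip // !mxE.
Qed.

Lemma perr_shift (R : realFieldType) M n (eps : 'F_2 -> Yout M -> R)
    (C : {vspace 'rV['F_2]_n}) c :
  (forall y, eps 1 y = eps 0 (rev_ord y)) -> c \in C ->
  Perr eps C c = \sum_y lik eps 0 y *
     (if [exists d : 'rV['F_2]_n, [&& d \in C, d != 0 & lik eps 0 y <= lik eps d y]]
      then 1 else 0).
Proof.
move=> hs cC; rewrite /Perr (reindex_inj (inv_inj (phiK c))) /=.
apply: eq_bigr => y _.
rewrite lik_phi // subrr; congr (_ * _); congr (if _ then _ else _).
apply/existsP/existsP => [[c' /and3P[c'C nc' hl]]|[d /and3P[dC nd hl]]].
  exists (c' - c); rewrite memvB //= subr_eq0 nc' /=.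
  by rewrite -lik_phi.
exists (d + c); rewrite memvD //= lik_phi // addrK hl andbT.
by apply: contra nd => /eqP h; rewrite -(addrK c d) h subrr.
Qed.

Definition typ n M (y : {ffun 'I_n -> Yout M}) : {ffun Yout M -> 'I_n.+1} :=
  [ffun j => inord (cnt (fun i => y i == j))].
Definition muf n M (d : 'rV['F_2]_n) (y : {ffun 'I_n -> Yout M}) : {ffun Yout M -> 'I_n.+1} :=
  [ffun j => inord (cnt (fun i => (d 0 i != 0) && (y i == j)))].

Lemma typE n M (y : {ffun 'I_n -> Yout M}) j : (typ y j : nat) = cnt (fun i => y i == j).
Proof. by rewrite ffunE inordK // ltnS cnt_le. Qed.
Lemma mufE n M d (y : {ffun 'I_n -> Yout M}) j :
  (muf d y j : nat) = cnt (fun i => (d 0 i != 0) && (y i == j)).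
Proof. by rewrite ffunE inordK // ltnS cnt_le. Qed.

Definition condd (R : realFieldType) n M (eps : 'F_2 -> Yout M -> R) (mu : {ffun Yout M -> 'I_n.+1}) : bool :=
  \prod_j eps 0 j ^+ mu j <= \prod_j eps 1 j ^+ mu j.

Lemma lik_split (R : realFieldType) M n (eps : 'F_2 -> Yout M -> R) (d : 'rV['F_2]_n) y :
  lik eps d y = \prod_(i | d 0 i != 0) eps 1 (y i) * \prod_(i | ~~ (d 0 i != 0)) eps 0 (y i).
Proof.
rewrite /lik (bigID (fun i => d 0 i != 0)) /=; congr (_ * _); apply: eq_bigr => i.
  by case: (F2_cases (d 0 i)) => -> //; rewrite eqxx.
by rewrite negbK => /eqP ->.
Qed.

Lemma lik0_split (R : realFieldType) M n (eps : 'F_2 -> Yout M -> R) (d : 'rV['F_2]_n) y :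
  lik eps 0 y = \prod_(i | d 0 i != 0) eps 0 (y i) * \prod_(i | ~~ (d 0 i != 0)) eps 0 (y i).
Proof.
rewrite /lik (bigID (fun i => d 0 i != 0)) /=; congr (_ * _); apply: eq_bigr => i _; by rewrite mxE.
Qed.

Lemma pw (R : realFieldType) M n (eps : 'F_2 -> Yout M -> R) (C : {vspace 'rV['F_2]_n}) y :
  (forall x y, 0 <= eps x y) ->
  lik eps 0 y * (if [exists d : 'rV['F_2]_n, [&& d \in C, d != 0 & lik eps 0 y <= lik eps d y]]
      then 1 else 0)
  <= lik eps 0 y * \sum_(d | (d \in C) && (d != 0)) (condd eps (muf d y))%:R.
Proof.
move=> he.
have L0 : 0 <= lik eps 0 y by apply: prodr_ge0 => i _.
case: (eqVneq (lik eps 0 y) 0) => [->|nz]; first by rewrite !mul0r.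
apply: ler_wpM2l => //.
case: ifP => [/existsP[d /and3P[dC dn hl]]|_]; last by apply: sumr_ge0 => *; rewrite ler0n.
rewrite (bigD1 d) /=; last by rewrite dC dn.
suff -> : condd eps (muf d y) by rewrite lerDl sumr_ge0 // => *; rewrite ler0n.
have Hp : forall x, \prod_j eps x j ^+ muf d y j = \prod_(i | d 0 i != 0) eps x (y i).
  by move=> x; rewrite prod_type; apply: eq_bigr => j _; rewrite mufE.
rewrite /condd !Hp.
move: hl nz; rewrite (lik0_split _ d) lik_split.
set A := \prod_(i | ~~ (d 0 i != 0)) eps 0 (y i) => hl nz.
have A0 : 0 < A.
  rewrite lt_def; apply/andP; split; last by apply: prodr_ge0 => i _.
  by move: nz; rewrite mulf_eq0 negb_or => /andP[_ ->].
by rewrite (ler_pM2r A0) in hl.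
Qed.

Lemma cnt_compl n (m : 'I_n -> bool) : cnt (fun i => ~~ m i) = (n - cnt m)%N.
Proof.
have E := cnt_split m (fun _ => true).
have h1 : cnt (fun _ : 'I_n => true) = n.
  by rewrite /cnt -[RHS]card_ord -sum1_card.
have h2 : cnt (fun i => m i && true) = cnt m.
  by apply: eq_bigr => i _; rewrite andbT.
have h3 : cnt (fun i => ~~ m i && true) = cnt (fun i => ~~ m i).
  by apply: eq_bigr => i _; rewrite andbT.
rewrite h1 h2 h3 in E.
move: E; set a := cnt m; set b := cnt _ => E.
lia.
Qed.

Lemma hwt_cnt n (d : 'rV['F_2]_n) : hwt d = cnt (fun i => d 0 i != 0).
Proof. by rewrite /hwt cnt_card. Qed.

Lemma cnt_and_le n (m P : 'I_n -> bool) : (cnt (fun i => m i && P i) <= cnt P)%N.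
Proof. by apply: leq_sum => i _; case: (m i); case: (P i). Qed.

Lemma count_d (R : realFieldType) M n (eps : 'F_2 -> Yout M -> R) (d : 'rV['F_2]_n)
    (l : {ffun Yout M -> 'I_n.+1}) :
  (\sum_j (l j : nat))%N = n ->
  \sum_(y : {ffun 'I_n -> Yout M} | typ y == l) (condd eps (muf d y))%:R =
  \sum_(mu : {ffun Yout M -> 'I_n.+1} |
          [&& (\sum_j (mu j : nat) == hwt d)%N, [forall j, (mu j <= l j)%N] & condd eps mu])
     multinom R (hwt d) (fun j => mu j : nat) * multinom R (n - hwt d) (fun j => (l j - mu j)%N).
Proof.
move=> hl.
set m := fun i : 'I_n => d 0 i != 0.
have -> : \sum_(y : {ffun 'I_n -> Yout M} | typ y == l) (condd eps (muf d y))%:R =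
          \sum_(y : {ffun 'I_n -> Yout M} | (typ y == l) && condd eps (muf d y)) 1 :> R.
  by rewrite [RHS]big_mkcondr /=; apply: eq_bigr => y _; case: condd.
rewrite (partition_big (muf d) (fun mu => [&& (\sum_j (mu j : nat) == hwt d)%N,
           [forall j, (mu j <= l j)%N] & condd eps mu])); last first.
  move=> y /andP[/eqP ty ->]; rewrite andbT; apply/andP; split.
    by rewrite (eq_bigr _ (fun j _ => mufE d y j)) cnt_sum hwt_cnt.
  apply/forallP => j; rewrite -ty mufE typE; exact: cnt_and_le.
apply: eq_bigr => mu /and3P[hs hle hc].
rewrite (eq_bigl (fun y : {ffun 'I_n -> Yout M} => tcond m (fun j => mu j : nat) (fun j => (l j - mu j)%N) y)); last first.
  move=> y; apply/idP/idP.
    move=> /andP[/andP[/eqP ty _] /eqP my]; apply/forallP => j.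
    rewrite -my -ty mufE typE (cnt_split m (fun i => y i == j)) eqxx /=.
    by rewrite addKn.
  move=> /forallP H.
  have my : muf d y = mu.
    by apply/ffunP => j; apply: val_inj; rewrite /= mufE; case/andP: (H j) => /eqP.
  have ty : typ y = l.
    apply/ffunP => j; apply: val_inj; rewrite /= typE (cnt_split m).
    case/andP: (H j) => /eqP -> /eqP ->; rewrite subnKC //.
    exact: (forallP hle j).
  by rewrite my ty !eqxx hc.
rewrite count_types.
- by rewrite hwt_cnt cnt_compl.
- by rewrite (eqP hs) hwt_cnt.
- rewrite sumnB; last by move=> j _; exact: (forallP hle j).
  by rewrite (eqP hs) hl [RHS]cnt_compl hwt_cnt.
Qed.

Lemma cnt_true n : cnt (fun _ : 'I_n => true) = n.
Proof. by rewrite /cnt -[RHS]card_ord -sum1_card. Qed.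

Lemma typ_sum n M (y : {ffun 'I_n -> Yout M}) : (\sum_j (typ y j : nat))%N = n.
Proof.
rewrite (eq_bigr _ (fun j _ => typE y j)).
by rewrite (cnt_sum y (fun _ => true)) cnt_true.
Qed.

Lemma typ_eq n M (y : {ffun 'I_n -> Yout M}) l :
  (typ y == l) = [forall j, cnt (fun i => y i == j) == l j].
Proof.
apply/eqP/forallP => [<- j|H]; first by rewrite typE.
by apply/ffunP => j; apply/val_inj; rewrite /= typE; exact/eqP.
Qed.

Lemma lik0_typ (R : realFieldType) M n (eps : 'F_2 -> Yout M -> R) y :
  lik eps 0 y = \prod_j eps 0 j ^+ @typ n M y j.
Proof.
rewrite /lik (eq_bigr (fun i => eps 0 (y i))); last by move=> i _; rewrite mxE.
rewrite (prod_type y (fun _ => true)); apply: eq_bigr => j _; by rewrite typE.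
Qed.

Lemma count_typ (R : realFieldType) M n (l : {ffun Yout M -> 'I_n.+1}) :
  (\sum_j (l j : nat))%N = n ->
  \sum_(y : {ffun 'I_n -> Yout M} | typ y == l) 1 = multinom R n (fun j => l j : nat).
Proof.
move=> hl.
rewrite (eq_bigl (fun y : {ffun 'I_n -> Yout M} =>
            tcond (fun _ => true) (fun j => l j : nat) (fun _ => 0%N) y)); last first.
  move=> y; rewrite typ_eq /tcond; apply: eq_forallb => j /=.
  suff -> : cnt (fun i : 'I_n => false) = 0%N by rewrite eqxx andbT.
  by rewrite /cnt big1.
rewrite count_types.
- have -> : cnt (xpredT : 'I_n -> bool) = n by exact: cnt_true.
  have -> : cnt (fun _ : 'I_n => ~~ true) = 0%N by rewrite /cnt big1.
  by rewrite multinom0 ?mulr1.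
- by rewrite hl cnt_true.
- by rewrite big1 // /cnt big1.
Qed.

Lemma multinom_ge0 (R : realFieldType) (K : finType) m (a : K -> nat) : 0 <= multinom R m a.
Proof. by rewrite /multinom divr_ge0 // prodr_ge0 // => k _. Qed.

Theorem theorem1 (R : realFieldType) (M n : nat) (eps : 'F_2 -> Yout M -> R)
    (C : {vspace 'rV['F_2]_n}) (dmin : nat) :
  (1 <= M)%N ->
  (forall x y, 0 <= eps x y) ->
  (forall x, \sum_(y : Yout M) eps x y = 1) ->
  (forall y, eps 1 y = eps 0 (rev_ord y)) ->
  is_dmin C dmin ->
  forall c, c \in C -> Perr eps C c <= bound eps C dmin.
Proof.
move=> _ he _ hs [_ hd] c cC.
rewrite perr_shift // /bound.
rewrite (partition_big (@typ n M) (fun l => (\sum_j (l j : nat) == n)%N)) /=; last first.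
  by move=> y _; rewrite typ_sum.
apply: ler_sum => l /eqP hl.
set E := \prod_j eps 0 j ^+ l j.
have E0 : 0 <= E by apply: prodr_ge0 => j _; apply: exprn_ge0.
set T := fun w => \sum_(mu : {ffun Yout M -> 'I_n.+1} |
          [&& (\sum_j (mu j : nat) == w)%N, [forall j, (mu j <= l j)%N] & condd eps mu])
     multinom R w (fun j => mu j : nat) * multinom R (n - w) (fun j => (l j - mu j)%N).
have T0 : forall w, 0 <= T w.
  by move=> w; apply: sumr_ge0 => mu _; rewrite mulr_ge0 // multinom_ge0.
set A := \sum_(dmin <= w < n.+1) (wdist C w)%:R * T w.
set B := multinom R n (fun j => l j : nat).
pose J := fun y : {ffun 'I_n -> Yout M} =>
   \sum_(d | (d \in C) && (d != 0)) ((condd eps (muf d y))%:R : R).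
have S1 : \sum_(y | typ y == l) lik eps 0 y *
     (if [exists d : 'rV['F_2]_n, [&& d \in C, d != 0 & lik eps 0 y <= lik eps d y]]
      then 1 else 0) <= E * \sum_(y | typ y == l) J y.
  rewrite big_distrr /=; apply: ler_sum => y /eqP ty.
  by rewrite /E -ty -lik0_typ; apply: pw.
have S2 : \sum_(y | typ y == l) lik eps 0 y *
     (if [exists d : 'rV['F_2]_n, [&& d \in C, d != 0 & lik eps 0 y <= lik eps d y]]
      then 1 else 0) <= E * B.
  rewrite /B -count_typ // big_distrr /=; apply: ler_sum => y /eqP ty.
  rewrite /E -ty -lik0_typ; apply: ler_wpM2l; first by apply: prodr_ge0 => i _.
  by case: ifP.
have S3 : \sum_(y | typ y == l) J y <= A.
  rewrite /J exchange_big /=.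
  rewrite (eq_bigr (fun d => T (hwt d))); last first.
    by move=> d _; rewrite count_d.
  have Hd : forall d, (d \in C) && (d != 0) ->
      T (hwt d) = \sum_(dmin <= w < n.+1) (hwt d == w)%:R * T w.
    move=> d /andP[dC dn].
    rewrite (eq_bigr (fun w => if w == hwt d then T w else 0)); last first.
      by move=> w _; rewrite eq_sym; case: (w == hwt d); rewrite ?mul1r ?mul0r.
    rewrite -big_mkcond big_nat1_eq.
    have -> : (dmin <= hwt d < n.+1)%N = true; last by [].
    apply/andP; split; last by rewrite ltnS hwt_cnt cnt_le.
    have := hd d 0 dC (mem0v C) dn.
    suff -> : hdist d 0 = hwt d by [].
    by rewrite /hdist /hwt; apply: eq_card => i; rewrite !inE mxE.
  rewrite (eq_bigr _ Hd) exchange_big /= /A.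
  apply: ler_sum => w _.
  rewrite -big_distrl /= ler_wpM2r //.
  rewrite -natr_sum ler_nat.
  rewrite (eq_bigr (fun d => if hwt d == w then 1%N else 0%N)); last by move=> d _; case: (_ == _).
  rewrite -big_mkcondr sum1dep_card /wdist.
  apply: subset_leq_card; apply/subsetP => x; rewrite !inE.
  by case/andP => /andP[-> _] ->.
have [hAB|hAB] := leP A B.
  apply: le_trans S1 _; exact: ler_wpM2l.
exact: S2.
Qed.
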